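(* Let $N\ge 1$ be an integer, $\delta>0$, $\mu>0$, let $\underline{x}\le\overline{x}$ and $x_0$ be real numbers, and let $\underline{u},\overline{u}\in\mathbb{R}^N$ (indexed $k=0,\dots,N-1$). Define real numbers $\max\mathcal{F}_k,\min\mathcal{F}_k$ for $k=0,\dots,N$ by $\max\mathcal{F}_0=\min\mathcal{F}_0=x_0$ and, for $k=0,\dots,N-1$, $$\max\mathcal{F}_{k+1}=\min\{\overline{x},\ \max\mathcal{F}_k-\delta\underline{u}_k\},\qquad \min\mathcal{F}_{k+1}=\max\{\underline{x},\ \min\mathcal{F}_k-\delta\overline{u}_k\},$$ and let $\mathcal{F}_k=[\min\mathcal{F}_k,\max\mathcal{F}_k]$. Assume the problem is feasible in the sense that $\underline{u}_k\le\overline{u}_k$ for all $k=0,\dots,N-1$ and $\max\mathcal{F}_k\ge\min\mathcal{F}_k$ for all $k=1,\dots,N$. Define $\max\mathcal{G}_N=\max\mathcal{F}_N$, $\min\mathcal{G}_N=\min\mathcal{F}_N$, $x^{(0)}_N=\tfrac12(\max\mathcal{G}_N+\min\mathcal{G}_N)$, and for $k=N-1,\dots,0$: $$\max\mathcal{G}_k=\min\{\max\mathcal{G}_{k+1}+\delta\overline{u}_k,\ \max\mathcal{F}_k\},\qquad \min\mathcal{G}_k=\max\{\min\mathcal{G}_{k+1}+\delta\underline{u}_k,\ \min\mathcal{F}_k\},$$ $$x^{(0)}_k=\tfrac12(\max\mathcal{G}_k+\min\mathcal{G}_k),\qquad u^{(0)}_k=\tfrac1\delta\big(x^{(0)}_k-x^{(0)}_{k+1}\big).$$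 Let $\Phi\in\mathbb{R}^N$ be the vector of all ones, let $\Psi\in\mathbb{R}^{N\times N}$ be the lower triangular matrix with $\Psi_{ij}=\delta$ for $j\le i$ and $\Psi_{ij}=0$ for $j>i$, and set $$A=\begin{bmatrix}\Psi\\-\Psi\end{bmatrix}\in\mathbb{R}^{2N\times N},\qquad b=\begin{bmatrix}\Phi(x_0-\overline{x})\\-\Phi(x_0-\underline{x})\end{bmatrix}\in\mathbb{R}^{2N}.$$ Let $u^{(0)}=(u^{(0)}_0,\dots,u^{(0)}_{N-1})$, $s^{(0)}=Au^{(0)}-b$, $S^{(0)}=\mathrm{diag}(s^{(0)})$, and $\theta_1^{(0)}=\frac1\mu (S^{(0)})^{-1}\mathbf{1}$ (when defined). Then $(u^{(0)},s^{(0)},\theta_1^{(0)})$ satisfy all of the conditions $$S^{(0)}\theta_1^{(0)}=\tfrac1\mu\mathbf{1},\quad Au^{(0)}-b-s^{(0)}=0,\quad u^{(0)}-\underline{u}\ge0,\quad \overline{u}-u^{(0)}\ge0,\quad s^{(0)}>0,\quad \theta_1^{(0)}\ge0$$ if and only if $\max\mathcal{F}_k>\underline{x}$ and $\min\mathcal{F}_k<\overline{x}$ for all $k\in\{1,\dots,N\}$.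
   Context: This concerns initialization of an interior point method for the problem $\min_u F(u)$ subject to $x=\Phi x_0-\Psi u$, $\underline{x}\le x_k\le\overline{x}$ for $k=1,\dots,N$, and $\underline{u}\le u\le\overline{u}$, rewritten with slack variable $s\in\mathbb{R}^{2N}$ as $Au-b-s=0$, $s\ge0$; note $Au-b=(\overline{x}\Phi-x,\ x-\underline{x}\Phi)$. The intervals $\mathcal{F}_k$ are the sets of reachable feasible states at step $k$, the sets $\mathcal{G}_k$ form a backward-refined tube, and $\mathcal{X}=[\underline{x},\overline{x}]$. Vector inequalities are componentwise and $\mathbf{1}$ is the all-ones vector of length $2N$. *)

(* Defs.v *)
From HB Require Import structures.
From mathcomp Require Import all_boot all_order all_algebra.
Set Implicit Arguments. Unset Strict Implicit. Unset Printing Implicit Defensive.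
Import Order.TTheory GRing.Theory Num.Theory.
Local Open Scope ring_scope.

Section IPMInit.
Variable R : realFieldType.
Variable N : nat.
Variables (delta xlo xhi x0 : R).
Variables (ulo uhi : 'cV[R]_N).

(* k-th entry (k : nat, 0-based) of a length-N column vector; 0 if k >= N
   (never used out of range below). *)
Definition vget (v : 'cV[R]_N) (k : nat) : R :=
  if (insub k : option 'I_N) is Some i then v i 0 else 0.

Fixpoint maxF (k : nat) : R :=
  match k with
  | 0 => x0
  | k'.+1 => Num.min xhi (maxF k' - delta * vget ulo k')
  end.
Fixpoint minF (k : nat) : R :=
  match k with
  | 0 => x0
  | k'.+1 => Num.max xlo (minF k' - delta * vget uhi k')
  end.

(* backward recursion, indexed by m = N - k *)
Fixpoint maxGrev (m : nat) : R :=
  match m with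
  | 0 => maxF N
  | m'.+1 => Num.min (maxGrev m' + delta * vget uhi (N - m'.+1)) (maxF (N - m'.+1))
  end.
Fixpoint minGrev (m : nat) : R :=
  match m with
  | 0 => minF N
  | m'.+1 => Num.max (minGrev m' + delta * vget ulo (N - m'.+1)) (minF (N - m'.+1))
  end.
Definition maxG (k : nat) : R := maxGrev (N - k).
Definition minG (k : nat) : R := minGrev (N - k).

Definition xinit (k : nat) : R := (maxG k + minG k) / 2.
Definition uinit_k (k : nat) : R := (xinit k - xinit k.+1) / delta.

Definition u0 : 'cV[R]_N := \col_(i < N) uinit_k i.

Definition Phi : 'cV[R]_N := const_mx 1.
Definition Psi : 'M[R]_N := \matrix_(i < N, j < N) (if (j <= i)%N then delta else 0).
Definition Amat : 'M[R]_(N + N, N) := col_mx Psi (- Psi).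
Definition bvec : 'cV[R]_(N + N) :=
  col_mx ((x0 - xhi) *: Phi) (- ((x0 - xlo) *: Phi)).

Definition s0 : 'cV[R]_(N + N) := Amat *m u0 - bvec.
Definition S0 : 'M[R]_(N + N) := diag_mx (s0^T).
Definition theta0 (mu : R) : 'cV[R]_(N + N) :=
  mu^-1 *: (invmx S0 *m const_mx 1).

End IPMInit.

(* Main.v *)
Require Import Defs.
From HB Require Import structures.
From mathcomp Require Import all_boot all_order all_algebra.
From mathcomp Require Import lra zify.
Import Order.TTheory GRing.Theory Num.Theory.
Local Open Scope ring_scope.

Lemma minC' (R : realFieldType) (x y : R) :
  (Num.min x y = x /\ x <= y) \/ (Num.min x y = y /\ y <= x).
Proof. by case: (leP x y) => h; [left | right; split => //; apply: ltW]. Qed.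

Lemma maxC' (R : realFieldType) (x y : R) :
  (Num.max x y = x /\ y <= x) \/ (Num.max x y = y /\ x <= y).
Proof. by case: (leP x y) => h; [right | left; split => //; apply: ltW]. Qed.

Lemma diag_entry (R : realFieldType) n (d : 'rV[R]_n) (v : 'cV[R]_n) i :
  (diag_mx d *m v) i 0 = d 0 i * v i 0.
Proof. by rewrite mul_diag_mx mxE. Qed.
Lemma tr_entry (R : realFieldType) n (v : 'cV[R]_n) i : v^T 0 i = v i 0.
Proof. by rewrite mxE. Qed.
Lemma sc_entry (R : realFieldType) n (a : R) (i : 'I_n) :
  (a *: (const_mx 1 : 'cV[R]_n)) i 0 = a.
Proof. by rewrite !mxE mulr1. Qed.

Arguments minC' {R}. Arguments maxC' {R}.

Theorem proposition1 (R : realFieldType) (N : nat) (delta mu xlo xhi x0 : R)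
    (ulo uhi : 'cV[R]_N) :
  (1 <= N)%N -> 0 < delta -> 0 < mu -> xlo <= xhi ->
  (forall i : 'I_N, ulo i 0 <= uhi i 0) ->
  (forall k : nat, (1 <= k <= N)%N ->
     minF delta xlo x0 uhi k <= maxF delta xhi x0 ulo k) ->
  let u := u0 delta xlo xhi x0 ulo uhi in
  let s := s0 delta xlo xhi x0 ulo uhi in
  let th := theta0 delta xlo xhi x0 ulo uhi mu in
  let A := Amat N delta in
  let b := bvec N xlo xhi x0 in
  (((S0 delta xlo xhi x0 ulo uhi *m th = mu^-1 *: const_mx 1) /\
   [/\ A *m u - b - s = 0,
       (forall i : 'I_N, 0 <= u i 0 - ulo i 0),
       (forall i : 'I_N, 0 <= uhi i 0 - u i 0),
       (forall i : 'I_(N + N), 0 < s i 0) &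
       (forall i : 'I_(N + N), 0 <= th i 0)]))
   <->
   (forall k : nat, (1 <= k <= N)%N ->
      xlo < maxF delta xhi x0 ulo k /\ minF delta xlo x0 uhi k < xhi).
Proof.
move=> N1 d0 mu0 xlohi ulohi Fne u s th A b.
pose mF := maxF delta xhi x0 ulo. pose nF := minF delta xlo x0 uhi.
pose mG := maxG delta xhi x0 ulo uhi. pose nG := minG delta xlo x0 ulo uhi.
pose xi := xinit delta xlo xhi x0 ulo uhi.
have vg : forall (v : 'cV[R]_N) (k : nat) (hk : (k < N)%N), vget v k = v (Ordinal hk) 0.
  move=> v k hk; rewrite /vget; case: insubP => [i _ ei | /negP //].
  by congr (v _ 0); apply: val_inj.
have mFS k : mF k.+1 = Num.min xhi (mF k - delta * vget ulo k) by [].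
have nFS k : nF k.+1 = Num.max xlo (nF k - delta * vget uhi k) by [].
have mGN : mG N = mF N by rewrite /mG /maxG subnn.
have nGN : nG N = nF N by rewrite /nG /minG subnn.
have mGS k : (k < N)%N -> mG k = Num.min (mG k.+1 + delta * vget uhi k) (mF k).
  move=> hk; rewrite /mG /maxG.
  have -> : (N - k = (N - k.+1).+1)%N by lia.
  rewrite /=. have -> : (N - (N - k.+1).+1 = k)%N by lia. done.
have nGS k : (k < N)%N -> nG k = Num.max (nG k.+1 + delta * vget ulo k) (nF k).
  move=> hk; rewrite /nG /minG.
  have -> : (N - k = (N - k.+1).+1)%N by lia.
  rewrite /=. have -> : (N - (N - k.+1).+1 = k)%N by lia. done.
have dul k : (k < N)%N -> delta * vget ulo k <= delta * vget uhi k.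
  by move=> hk; rewrite !(vg _ _ hk) ler_pM2l.
have FB k : (1 <= k)%N -> xlo <= nF k /\ mF k <= xhi.
  case: k => [//|k] _; rewrite mFS nFS.
  by case: (minC' xhi (mF k - delta * vget ulo k)) => -[-> h];
     case: (maxC' xlo (nF k - delta * vget uhi k)) => -[-> h']; lra.
have F2 k : mF k.+1 <= mF k - delta * vget ulo k /\ nF k - delta * vget uhi k <= nF k.+1.
  rewrite mFS nFS.
  by case: (minC' xhi (mF k - delta * vget ulo k)) => -[-> h];
     case: (maxC' xlo (nF k - delta * vget uhi k)) => -[-> h']; lra.
have FNE k : (k <= N)%N -> nF k <= mF k.
  case: k => [|k] hk; first by rewrite /nF /mF /= lexx.
  by apply: Fne; rewrite hk.
have T' m : (m <= N)%N -> nF (N - m)%N <= nG (N - m)%N /\ nG (N - m)%N <= mG (N - m)%N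
    /\ mG (N - m)%N <= mF (N - m)%N.
  elim: m => [|m IH] hm.
    by rewrite subn0 mGN nGN lexx; split => //; split => //; apply: FNE.
  have [h1 [h2 h3]] := IH (ltnW hm).
  have hk : (N - m.+1 < N)%N by lia.
  have e : (N - m = (N - m.+1).+1)%N by lia.
  rewrite e in h1 h2 h3.
  have := dul _ hk; have := F2 (N - m.+1)%N; have := FNE (N - m.+1)%N (leq_subr _ _).
  move: h1 h2 h3; rewrite (mGS _ hk) (nGS _ hk).
  set a := mG _; set c := nG _; set p := delta * vget ulo _; set q := delta * vget uhi _.
  move=> h1 h2 h3 hf [f1 f2] hpq.
  case: (minC' (a + q) (mF (N - m.+1)%N)) => -[-> h];
     case: (maxC' (c + p) (nF (N - m.+1)%N)) => -[-> h'].
  1-4: lra.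
have Tb (k : nat) : (k <= N)%N -> nF k <= nG k /\ nG k <= mG k /\ mG k <= mF k.
  by move=> hk; have := T' (N - k)%N (leq_subr _ _); rewrite subKn.
have xiE k : xi k = (mG k + nG k) / 2 by [].
have xi0 : xi 0%N = x0.
  have [a1 [a2 a3]] := Tb 0%N (leq0n _).
  change (nF 0%N) with x0 in a1; change (mF 0%N) with x0 in a3.
  rewrite xiE; lra.
have Pu (i : 'I_N) : (Psi N delta *m u) i 0 = x0 - xi i.+1.
  rewrite mxE.
  rewrite (eq_bigr (fun j : 'I_N => if (j <= i)%N then xi j - xi j.+1 else 0)); last first.
    move=> j _; rewrite !mxE /uinit_k -/xi; case: ifP => _; last by rewrite mul0r.
    by rewrite mulrC divfK // (gt_eqF d0).
  rewrite -big_mkcond /=.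
  have -> : \sum_(j < N | (j <= i)%N) (xi j - xi j.+1) = \sum_(j < i.+1) (xi j - xi j.+1).
    by rewrite (big_ord_widen _ (fun j => xi j - xi j.+1) (ltn_ord i)).
  rewrite -(big_mkord xpredT (fun j => xi j - xi j.+1)).
  rewrite (telescope_sumr_eq (fun k => - xi k)) //; last by move=> k _; rewrite opprK addrC.
  by rewrite opprK xi0 addrC.
have stop (i : 'I_N) : s (lshift N i) 0 = xhi - xi i.+1.
  rewrite /s /s0 -/u /Amat /bvec mul_col_mx opp_col_mx add_col_mx col_mxEu !mxE.
  by have := Pu i; rewrite mxE => ->; rewrite mulr1; lra.
have sbot (i : 'I_N) : s (rshift N i) 0 = xi i.+1 - xlo.
  rewrite /s /s0 -/u /Amat /bvec mul_col_mx mulNmx opp_col_mx add_col_mx col_mxEd !mxE.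
  by have := Pu i; rewrite mxE => ->; rewrite mulr1; lra.
have ub k : (k < N)%N -> delta * vget ulo k <= xi k - xi k.+1 <= delta * vget uhi k.
  move=> hk; have [h1 [h2 h3]] := Tb k.+1 hk; have [f1 f2] := F2 k.
  have := dul k hk; have := FNE k (ltnW hk).
  move: h1 h2 h3 f1 f2; rewrite !xiE (mGS _ hk) (nGS _ hk).
  set a := mG _; set c := nG _; set p := delta * vget ulo _; set q := delta * vget uhi _.
  move=> h1 h2 h3 f1 f2 hf hpq.
  case: (minC' (a + q) (mF k)) => -[-> h];
     case: (maxC' (c + p) (nF k)) => -[-> h'].
  1-4: by apply/andP; split; lra.
have pinchL : (forall k, (1 <= k <= N)%N -> xlo < mF k /\ nF k < xhi) ->
    forall k, (1 <= k <= N)%N -> xlo < mG k.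
  move=> HF.
  have step j : (j < N)%N -> mG j = nF j /\ nF j < mF j ->
      mG j.+1 = nF j.+1 /\ nF j.+1 < mF j.+1.
    move=> hj [e1 e2].
    have [h1 [h2 h3]] := Tb j.+1 hj; have [_ hx] := HF j.+1 hj.
    have := dul j hj; have := FNE j (ltnW hj); have [f1 f2] := F2 j.
    move: e1 h1 h2 h3 hx f1 f2; rewrite (mGS _ hj) !mFS !nFS.
    set a := mG _; set c := nG _; set p := delta * vget ulo _; set q := delta * vget uhi _.
    case: (minC' (a + q) (mF j)) => -[-> h];
    case: (minC' xhi (mF j - p)) => -[-> h'];
    case: (maxC' xlo (nF j - q)) => -[-> h''];
    move=> e1 h1 h2 h3 hx f1 f2 hf hpq; split; lra.
  have toN d : forall j, (j + d = N)%N -> mG j = nF j /\ nF j < mF j -> False.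
    elim: d => [|d IH] j hjd.
      rewrite addn0 in hjd; subst j; rewrite mGN; case; lra.
    move=> hI; apply: (IH j.+1); first by rewrite addSnnS.
    by apply: step => //; lia.
  move=> k /andP[k1 kN]; have [h1 [h2 h3]] := Tb k kN; have [fb1 _] := FB k k1.
  have [hm _] := HF k (introT andP (conj k1 kN)).
  case: (leP (mG k) xlo) => // hle; exfalso.
  apply: (toN (N - k)%N k); first by rewrite subnKC.
  split; lra.
have pinchU : (forall k, (1 <= k <= N)%N -> xlo < mF k /\ nF k < xhi) ->
    forall k, (1 <= k <= N)%N -> nG k < xhi.
  move=> HF.
  have step j : (j < N)%N -> nG j = mF j /\ nF j < mF j ->
      nG j.+1 = mF j.+1 /\ nF j.+1 < mF j.+1.
    move=> hj [e1 e2].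
    have [h1 [h2 h3]] := Tb j.+1 hj; have [hx _] := HF j.+1 hj.
    have := dul j hj; have := FNE j (ltnW hj); have [f1 f2] := F2 j.
    move: e1 h1 h2 h3 hx f1 f2; rewrite (nGS _ hj) !mFS !nFS.
    set a := mG _; set c := nG _; set p := delta * vget ulo _; set q := delta * vget uhi _.
    case: (maxC' (c + p) (nF j)) => -[-> h];
    case: (minC' xhi (mF j - p)) => -[-> h'];
    case: (maxC' xlo (nF j - q)) => -[-> h''];
    move=> e1 h1 h2 h3 hx f1 f2 hf hpq; split; lra.
  have toN d : forall j, (j + d = N)%N -> nG j = mF j /\ nF j < mF j -> False.
    elim: d => [|d IH] j hjd.
      rewrite addn0 in hjd; subst j; rewrite nGN; case; lra.
    move=> hI; apply: (IH j.+1); first by rewrite addSnnS.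
    by apply: step => //; lia.
  move=> k /andP[k1 kN]; have [h1 [h2 h3]] := Tb k kN; have [_ fb2] := FB k k1.
  have [_ hm] := HF k (introT andP (conj k1 kN)).
  case: (leP xhi (nG k)) => // hle; exfalso.
  apply: (toN (N - k)%N k); first by rewrite subnKC.
  split; lra.
split.
  case=> _ [_ _ _ hs _] k /andP[k1 kN].
  have hk : (k.-1 < N)%N by lia.
  have := hs (lshift N (Ordinal hk)); have := hs (rshift N (Ordinal hk)).
  rewrite stop sbot /=.
  have -> : k.-1.+1 = k by lia.
  have [h1 [h2 h3]] := Tb k kN; rewrite xiE => hb ht.
  rewrite -/mF -/nF; split; lra.
move=> HF.
have xin k : (1 <= k <= N)%N -> xlo < xi k /\ xi k < xhi.
  move=> hk; have [h1 [h2 h3]] := Tb k (proj2 (andP hk)).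
  have [fb1 fb2] := FB k (proj1 (andP hk)).
  have := pinchL HF k hk; have := pinchU HF k hk.
  rewrite xiE; split; lra.
have spos (i : 'I_(N + N)) : 0 < s i 0.
  rewrite -(splitK i); case: (split i) => j /=; [rewrite stop | rewrite sbot];
  have [l r] := xin j.+1 (ltn_ord j); lra.
have unitS : S0 delta xlo xhi x0 ulo uhi \in unitmx.
  rewrite unitmxE /S0 det_diag unitfE; apply/prodf_neq0 => j _.
  by rewrite mxE (gt_eqF (spos j)).
have Sth : S0 delta xlo xhi x0 ulo uhi *m th = mu^-1 *: const_mx 1.
  by rewrite /th /theta0 scalemxAr mulmxA mulmxV // mul1mx.
split; first exact: Sth.
split.
- by rewrite /A /b /s /s0 /u subrr.
- case=> k hk; have /andP[l r] := ub k hk; rewrite (vg _ _ hk) in l.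
  rewrite /u /u0 mxE /uinit_k -/xi subr_ge0 ler_pdivlMr // mulrC; exact: l.
- case=> k hk; have /andP[l r] := ub k hk; rewrite (vg _ _ hk) in r.
  rewrite /u /u0 mxE /uinit_k -/xi subr_ge0 ler_pdivrMr // mulrC; exact: r.
- exact: spos.
- move=> i; have := congr1 (fun M : 'cV[R]_(N + N) => M i 0) Sth.
  rewrite /S0 diag_entry tr_entry sc_entry => E.
  have : 0 < s0 delta xlo xhi x0 ulo uhi i 0 * th i 0 by rewrite E invr_gt0.
  by rewrite pmulr_rgt0 ?(spos i) // => /ltW.
Qed.
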